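(* Let $(V,\mu)$ be an infinite, connected, locally finite weighted graph, $q>1$, $\sigma\in\ell^+(V)$, $o\in V$. If $u\ge0$ on $V$ satisfies $-\Delta u\ge\sigma u^q$ in $V$, then for every integer $R\ge1$, $$u(o)^q\sigma(o)\mu(o)\le\Big(\frac q{q-1}\Big)^{\frac q{q-1}}\Big(\sum_{y\in V}g_{B_R}(o,y)^q\sigma(y)\mu(y)\Big)^{-\frac1{q-1}},$$ where $B_R=B(o,R)$.
   Context: Weighted graph: $\mu_{xy}=\mu_{yx}\ge0$, $\mu_{xy}>0$ iff $x\sim y$, $\mu(x)=\sum_{y\sim x}\mu_{xy}$; Laplacian $\Delta u(x)=\frac1{\mu(x)}\sum_{y\sim x}\mu_{xy}(u(y)-u(x))$. $d$ is the graph distance, $B(o,R)=\{x:d(o,x)\le R\}$. For finite $U\subset V$, $g_U(x,y)=\sum_{n\ge0}\mathbb P_x[X_n=y,n<\tau_U]/\mu(y)$ for $x,y\in U$ (and $0$ otherwise), where $(X_n)$ is the random walk with $P(x,y)=\mu_{xy}/\mu(x)$ and $\tau_U$ its first exit time from $U$. *)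

(* Defs.v *)
From HB Require Import structures.
From mathcomp Require Import all_boot all_order all_algebra.
From mathcomp Require Import all_classical all_reals all_analysis.
Set Implicit Arguments. Unset Strict Implicit. Unset Printing Implicit Defensive.
Import Order.TTheory GRing.Theory Num.Theory.
Local Open Scope classical_set_scope.
Local Open Scope ring_scope.

Section Graph.
Variables (R : realType) (V : choiceType) (mu : V -> V -> R).

Definition adj (x y : V) : Prop := 0 < mu x y.
Definition nbrs (x : V) : set V := [set y | adj x y].

Definition weighted_graph : Prop :=
  (forall x y, mu x y = mu y x) /\ (forall x y, 0 <= mu x y).

Definition locally_finite : Prop := forall x, finite_set (nbrs x).

(* graph ball: gball o n = B(o,n) = {x | d(o,x) <= n} *)
Fixpoint gball (o : V) (n : nat) : set V :=
  match n with
  | 0 => [set o]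
  | n.+1 => gball o n `|` [set x | exists2 y, gball o n y & adj y x]
  end.

Definition connected_graph : Prop := forall x y, exists n, gball x n y.

Definition vmu (x : V) : R := \sum_(y \in nbrs x) mu x y.

Definition lap (u : V -> R) (x : V) : R :=
  (vmu x)^-1 * \sum_(y \in nbrs x) mu x y * (u y - u x).

Definition trans (x y : V) : R := mu x y / vmu x.

(* killed walk: killed U n x y = P_x[X_n = y, n < tau_U] *)
Fixpoint killed (U : set V) (n : nat) (x y : V) : R :=
  match n with
  | 0 => if (x \in U) && (x == y) then 1 else 0
  | n.+1 => if x \in U then \sum_(z \in nbrs x) trans x z * killed U n z y
            else 0
  end.

Definition green (U : set V) (x y : V) : R :=
  if (x \in U) && (y \in U) then limn (fun N : nat => \sum_(n < N) killed U n x y) / vmu y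
  else 0.

End Graph.

(* Main.v *)
Require Import Defs.
From HB Require Import structures.
From mathcomp Require Import all_boot all_order all_algebra.
From mathcomp Require Import all_classical all_reals all_analysis.
From mathcomp Require Import finmap ring lra.
Import Order.TTheory GRing.Theory Num.Theory numFieldNormedType.Exports.
Local Open Scope classical_set_scope.
Local Open Scope ring_scope.

Lemma young_tangent (R : realType) (q s t : R) : 1 < q -> 0 <= s -> 0 <= t ->
  q * (powR t (q-1) * s) <= powR s q + (q-1) * powR t q.
Proof.
move=> q1 s0 t0.
have q0 : 0 < q by apply: lt_trans q1.
have p0 : 0 < q - 1 by rewrite subr_gt0.
have qq0 : 0 < q / (q - 1) by rewrite divr_gt0.
have := @conjugate_powR R s (powR t (q-1)) q (q / (q-1)) s0 (powR_ge0 _ _) q0 qq0.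
have E : (q - 1) * (q / (q - 1)) = q by field; rewrite gt_eqF.
have E2 : q^-1 + (q / (q - 1))^-1 = 1 by field; rewrite !gt_eqF.
rewrite -powRrM E => /(_ E2) H.
have E3 : powR t q / (q / (q - 1)) = (q - 1) * powR t q / q by field; rewrite !gt_eqF.
rewrite E3 in H.
rewrite mulrC -(ler_pM2r q0) in H.
rewrite mulrDl !divfK ?gt_eqF // in H.
by rewrite mulrC.
Qed.

Lemma conv_pt (R : realType) (q ux uz hx hz : R) : 1 < q -> 0 < ux -> 0 < uz ->
  0 <= hx -> 0 <= hz ->
  q * powR (hx/ux) (q-1) * hz - (q-1) * powR (hx/ux) q * uz <= hz * powR (hz/uz) (q-1).
Proof.
move=> q1 ux0 uz0 hx0 hz0.
have q0 : 0 < q by apply: lt_trans q1.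
have s0 : 0 <= hz / uz by rewrite divr_ge0 // ltW.
have t0 : 0 <= hx / ux by rewrite divr_ge0 // ltW.
have := young_tangent _ _ _ _ q1 s0 t0.
rewrite -(mulr_powRB1 s0 q0) -(ler_pM2r uz0) => H.
rewrite lerBlDr.
have E1 : q * ((hx / ux) `^ (q - 1) * (hz / uz)) * uz = q * (hx / ux) `^ (q - 1) * hz.
  by field; rewrite gt_eqF.
have E2 : (hz / uz * (hz / uz) `^ (q - 1) + (q - 1) * (hx / ux) `^ q) * uz =
  hz * (hz / uz) `^ (q - 1) + (q - 1) * (hx / ux) `^ q * uz.
  by field; rewrite gt_eqF.
by rewrite -E1 -E2.
Qed.
Lemma mu0 (R : realType) (V : choiceType) (mu : V -> V -> R) x y :
  weighted_graph mu -> ~ adj mu x y -> mu x y = 0.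
Proof.
move=> [_ h] nxy; apply/eqP; rewrite eq_le h andbT leNgt; apply/negP => H; exact: nxy.
Qed.

Lemma gball_center (R : realType) (V : choiceType) (mu : V -> V -> R) o n :
  gball mu o n o.
Proof. by elim: n => [|n IH] //=; left. Qed.

Lemma gball_nbrs (R : realType) (V : choiceType) (mu : V -> V -> R) o n y :
  gball mu o n y -> nbrs mu y `<=` gball mu o n.+1.
Proof. by move=> hy z hz; right; exists y. Qed.

Lemma gball_finite (R : realType) (V : choiceType) (mu : V -> V -> R) o n :
  locally_finite mu -> finite_set (gball mu o n).
Proof.
move=> lf; elim: n => [|n IH] /=; first exact: finite_set1.
rewrite finite_setU; split => //.
apply: (@sub_finite_set _ _ (\bigcup_(y in gball mu o n) nbrs mu y)).
  by move=> z [y hy hz]; exists y.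
by apply: bigcup_finite => // y _; exact: lf.
Qed.

Lemma fsum_wide (R : realType) (V : choiceType) (P W : set V) (G : V -> R) :
  finite_set W -> P `<=` W -> (forall z, ~ P z -> G z = 0) ->
  \sum_(z \in P) G z = \sum_(z <- (fset_set W : {fset V})) G z.
Proof.
move=> fW PW G0; apply: fsbig_fwiden => //.
- move=> z /PW Wz /=; rewrite in_fset_set //.
  exact: mem_set.
- by move=> z [_ nP]; rewrite /preimage /= (G0 z nP).
Qed.
Arguments mu0 {R V mu x y}.
Arguments young_tangent {R q s t}.
Arguments conv_pt {R q ux uz hx hz}.
Lemma sum_delta (R : realType) (V : choiceType) (r : seq V) (x : V) (F : V -> R) :
  uniq r -> x \in r -> \sum_(y <- r) (if x == y then 1 else 0) * F y = F x.
Proof.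
move=> ur xr; rewrite (bigD1_seq x) //= eqxx mul1r big1 ?addr0 // => y yx.
by rewrite eq_sym (negbTE yx) mul0r.
Qed.

Lemma K_out_x (R : realType) (V : choiceType) (mu : V -> V -> R) (U : set V) n x y :
  ~ U x -> killed mu U n x y = 0.
Proof.
move=> nx; case: n => [|n] /=.
  by case: ifP => // /andP[/set_mem].
by case: ifP => // /set_mem.
Qed.

Lemma K_out_y (R : realType) (V : choiceType) (mu : V -> V -> R) (U : set V) n x y :
  ~ U y -> killed mu U n x y = 0.
Proof.
move=> ny; elim: n x => [|n IH] x /=.
  case: ifP => // /andP[/set_mem Ux /eqP exy]; by subst.
case: ifP => // _; rewrite fsbig1 // => z _; by rewrite IH mulr0.
Qed.

Lemma trans_ge0 (R : realType) (V : choiceType) (mu : V -> V -> R) x z :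
  weighted_graph mu -> (forall x, 0 < vmu mu x) -> 0 <= trans mu x z.
Proof. by move=> [_ h] vp; rewrite /trans divr_ge0 // ltW. Qed.

Lemma K_ge0 (R : realType) (V : choiceType) (mu : V -> V -> R) (U : set V) n x y :
  weighted_graph mu -> (forall x, 0 < vmu mu x) -> 0 <= killed mu U n x y.
Proof.
move=> wg vp; elim: n x => [|n IH] x /=; first by case: ifP.
case: ifP => // _; apply: fsumr_ge0 => z _; by rewrite mulr_ge0 // trans_ge0.
Qed.

Lemma K_step (R : realType) (V : choiceType) (mu : V -> V -> R) (U W : set V) n x y :
  weighted_graph mu -> finite_set W -> nbrs mu x `<=` W -> U x ->
  killed mu U n.+1 x y = \sum_(z <- (fset_set W : {fset V})) trans mu x z * killed mu U n z y.
Proof.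
move=> wg fW NW Ux /=; rewrite ifT; last exact: mem_set.
apply: fsum_wide => // z nz; by rewrite /trans (mu0 wg nz) mul0r mul0r.
Qed.
Arguments K_out_x {R V mu U n x y}.
Arguments K_out_y {R V mu U n x y}.
Arguments trans_ge0 {R V mu x z}.
Arguments K_ge0 {R V mu U n x y}.
Arguments K_step {R V mu U W n x y}.
Lemma K0_eq (R : realType) (V : choiceType) (mu : V -> V -> R) (U : set V) x y :
  U x -> killed mu U 0 x y = if x == y then 1 else 0.
Proof. by move=> Ux /=; rewrite (mem_set Ux). Qed.

Lemma K_last (R : realType) (V : choiceType) (mu : V -> V -> R) (U W : set V) n x y :
  weighted_graph mu -> finite_set W -> (forall x, U x -> nbrs mu x `<=` W) -> U `<=` W ->
  U y ->
  killed mu U n.+1 x y = \sum_(z <- (fset_set W : {fset V})) killed mu U n x z * trans mu z y.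
Proof.
move=> wg fW NW UW Uy.
have us : uniq (fset_set W : {fset V}) by [].
have ins : forall z, U z -> z \in (fset_set W : {fset V}).
  by move=> z /UW Wz; rewrite in_fset_set // mem_set.
elim: n x => [|n IH] x.
  have [Ux|nUx] := pselect (U x); last first.
    by rewrite K_out_x // big1 // => z _; rewrite K_out_x // mul0r.
  rewrite (K_step wg fW (NW x Ux) Ux).
  have E : forall z, killed mu U 0 z y = (if y == z then 1 else 0).
    move=> z; have [<-|nyz] := eqVneq y z; first by rewrite K0_eq // eqxx.
    by rewrite /=; case: ifP => // /andP[_ /eqP zy]; rewrite zy eqxx in nyz.
  under eq_bigr => z _ do rewrite E mulrC.
  rewrite sum_delta ?ins //.
  under eq_bigr => z _ do rewrite K0_eq //.
  by rewrite sum_delta ?ins.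
have [Ux|nUx] := pselect (U x); last first.
  by rewrite K_out_x // big1 // => z _; rewrite K_out_x // mul0r.
rewrite (K_step wg fW (NW x Ux) Ux).
under eq_bigr => z _ do rewrite IH big_distrr /=.
rewrite exchange_big; apply: eq_bigr => w _.
rewrite (K_step wg fW (NW x Ux) Ux) big_distrl; apply: eq_bigr => z _.
by rewrite mulrA.
Qed.
Arguments K0_eq {R V mu U x y}.
Arguments K_last {R V mu U W n x y}.
Arguments fsum_wide {R V P W G}.
Lemma vmu_s (R : realType) (V : choiceType) (mu : V -> V -> R) (W : set V) x :
  weighted_graph mu -> finite_set W -> nbrs mu x `<=` W ->
  vmu mu x = \sum_(z <- (fset_set W : {fset V})) mu x z.
Proof. by move=> wg fW NW; rewrite /vmu; apply: fsum_wide => // z nz; exact: mu0 wg nz. Qed.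
Arguments vmu_s {R V mu W x}.

Lemma u_decomp (R : realType) (V : choiceType) (mu : V -> V -> R) (W : set V) (u : V -> R) x :
  weighted_graph mu -> (forall x, 0 < vmu mu x) -> finite_set W -> nbrs mu x `<=` W ->
  u x = - lap mu u x + \sum_(z <- (fset_set W : {fset V})) trans mu x z * u z.
Proof.
move=> wg vp fW NW.
have v0 := vp x.
have vne : vmu mu x != 0 by rewrite gt_eqF.
rewrite /lap (fsum_wide fW NW); last by move=> z nz; rewrite (mu0 wg nz) mul0r.
have E1 : \sum_(z <- (fset_set W : {fset V})) mu x z * (u z - u x) =
   \sum_(z <- (fset_set W : {fset V})) mu x z * u z - u x * vmu mu x.
  rewrite (vmu_s wg fW NW) mulr_sumr -sumrB; apply: eq_bigr => z _; ring.
have E2 : \sum_(z <- (fset_set W : {fset V})) trans mu x z * u z =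
   (vmu mu x)^-1 * \sum_(z <- (fset_set W : {fset V})) mu x z * u z.
  rewrite mulr_sumr; apply: eq_bigr => z _; rewrite /trans; field; exact: vne.
rewrite E1 E2; field; exact: vne.
Qed.
Arguments u_decomp {R V mu W} u {x}.

Lemma repr (R : realType) (V : choiceType) (mu : V -> V -> R) (U W : set V) (u : V -> R) N x :
  weighted_graph mu -> (forall x, 0 < vmu mu x) -> finite_set W ->
  (forall x, U x -> nbrs mu x `<=` W) -> U `<=` W -> (forall x, 0 <= u x) ->
  U x ->
  \sum_(n < N) \sum_(y <- (fset_set W : {fset V})) killed mu U n x y * - lap mu u y <= u x.
Proof.
move=> wg vp fW NW UW u0.
have ins : forall z, U z -> z \in (fset_set W : {fset V}).
  by move=> z /UW Wz; rewrite in_fset_set // mem_set.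
elim: N x => [|N IH] x Ux; first by rewrite big_ord0.
rewrite big_ord_recl.
under eq_bigr => y _ do rewrite K0_eq //.
rewrite sum_delta ?ins //.
rewrite [leRHS](u_decomp u wg vp fW (NW x Ux)) lerD2l.
have E : \sum_(i < N) \sum_(y <- (fset_set W : {fset V})) killed mu U i.+1 x y * - lap mu u y =
  \sum_(z <- (fset_set W : {fset V})) trans mu x z *
     \sum_(i < N) \sum_(y <- (fset_set W : {fset V})) killed mu U i z y * - lap mu u y.
  under eq_bigr => i _ do under eq_bigr => y _ do rewrite (K_step wg fW (NW x Ux) Ux) big_distrl.
  under eq_bigr => i _ do rewrite exchange_big.
  rewrite exchange_big; apply: eq_bigr => z _.
  rewrite mulr_sumr; apply: eq_bigr => i _.
  rewrite mulr_sumr; apply: eq_bigr => y _.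
  by rewrite /= mulrA.
rewrite E; apply: ler_sum => z _.
apply: ler_wpM2l; first exact: trans_ge0.
have [Uz|nUz] := pselect (U z); first exact: IH.
rewrite big1 // => i _; rewrite big1 // => y _; by rewrite K_out_x // mul0r.
Qed.
Arguments repr {R V mu U W} u {N x}.
Definition HH {R : realType} {V : choiceType} (mu : V -> V -> R) (U : set V) o N y :=
  \sum_(n < N) killed mu U n o y.

Lemma HH_ge0 {R : realType} {V : choiceType} {mu : V -> V -> R} {U : set V} {o N y} :
  weighted_graph mu -> (forall x, 0 < vmu mu x) -> 0 <= HH mu U o N y.
Proof. by move=> wg vp; apply: sumr_ge0 => n _; exact: K_ge0. Qed.

Lemma HH_mono {R : realType} {V : choiceType} {mu : V -> V -> R} {U : set V} o {N M} y :
  weighted_graph mu -> (forall x, 0 < vmu mu x) -> (N <= M)%N -> HH mu U o N y <= HH mu U o M y.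
Proof.
move=> wg vp NM; rewrite /HH -(subnKC NM) big_split_ord /= lerDl.
by apply: sumr_ge0 => n _; exact: K_ge0.
Qed.

Lemma HH_harm {R : realType} {V : choiceType} {mu : V -> V -> R} {U W : set V} {o N y} :
  weighted_graph mu -> (forall x, 0 < vmu mu x) -> finite_set W ->
  (forall x, U x -> nbrs mu x `<=` W) -> U `<=` W -> U o -> U y ->
  HH mu U o N y <= (if o == y then 1 else 0) +
     \sum_(z <- (fset_set W : {fset V})) mu y z * (HH mu U o N z / vmu mu z).
Proof.
move=> wg vp fW NW UW Uo Uy.
have t0 : forall N z, 0 <= mu y z * (HH mu U o N z / vmu mu z).
  move=> N' z; rewrite mulr_ge0 ?divr_ge0 ?HH_ge0 ?(ltW (vp _)) //; by case: wg.
case: N => [|M].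
  rewrite /HH big_ord0; apply: addr_ge0; first by case: ifP.
  by apply: sumr_ge0 => z _; exact: t0.
rewrite /HH big_ord_recl K0_eq // lerD2l.
under eq_bigr => i _ do rewrite (K_last wg fW NW UW Uy).
rewrite exchange_big /=; apply: ler_sum => z _.
rewrite -mulr_suml /trans.
case: wg => sym mu0'.
rewrite sym mulrCA; apply: ler_wpM2l => //.
apply: ler_wpM2r; first by rewrite invr_ge0 ltW.
have := HH_mono (U:=U) o z (conj sym mu0') vp (leqnSn M).
by rewrite /HH.
Qed.
Lemma stepA_real {R : realType} (q v hx ux T T' d A B C lp sg Hq : R) :
  1 < q -> 0 < v -> 0 <= T -> T' * ux = T * hx ->
  q * T * B - (q - 1) * (T' * C) <= A -> v * hx - d <= B -> C = v * lp + ux * v ->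
  T' * lp <= - (sg * Hq) ->
  v * (hx * T) - A <= q * T * d - (q - 1) * (v * sg * Hq).
Proof.
move=> q1 v0 T0 ET HA HB HC Hl.
have h1 : 0 <= q * T * (B - (v * hx - d)) by rewrite mulr_ge0 ?subr_ge0 // mulr_ge0 // ltW // (lt_trans _ q1).
have h2 : 0 <= (q - 1) * v * (- (sg * Hq) - T' * lp) by rewrite !mulr_ge0 ?subr_ge0 // ltW // subr_gt0.
rewrite HC in HA.
have E : T' * (v * lp + ux * v) = v * (T' * lp) + v * (T * hx) by rewrite -ET; ring.
rewrite E in HA.
nra.
Qed.
Lemma sum_mu_u {R : realType} {V : choiceType} {mu : V -> V -> R} {W : set V} (u : V -> R) {x} :
  weighted_graph mu -> (forall x, 0 < vmu mu x) -> finite_set W -> nbrs mu x `<=` W ->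
  \sum_(z <- (fset_set W : {fset V})) mu x z * u z = vmu mu x * lap mu u x + u x * vmu mu x.
Proof.
move=> wg vp fW NW.
have vne : vmu mu x != 0 by rewrite gt_eqF.
rewrite /lap (fsum_wide fW NW); last by move=> z nz; rewrite (mu0 wg nz) mul0r.
rewrite mulrA mulfV // mul1r (vmu_s wg fW NW) mulr_sumr -big_split /=.
apply: eq_bigr => z _; ring.
Qed.

Lemma main_ineq {R : realType} {V : choiceType} {mu : V -> V -> R} {U W : set V} (o : V) (q : R)
  (sigma u h : V -> R) :
  weighted_graph mu -> (forall x, 0 < vmu mu x) -> finite_set W ->
  (forall x, U x -> nbrs mu x `<=` W) -> U `<=` W -> U o ->
  1 < q -> (forall x, 0 <= sigma x) -> (forall x, 0 < u x) ->
  (forall x, sigma x * powR (u x) q <= - lap mu u x) ->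
  (forall x, 0 <= h x) -> (forall x, ~ U x -> h x = 0) ->
  (forall y, U y -> vmu mu y * h y <= (if o == y then 1 else 0) +
       \sum_(z <- (fset_set W : {fset V})) mu y z * h z) ->
  \sum_(x <- (fset_set W : {fset V})) vmu mu x * sigma x * powR (h x) q <=
     q / (q - 1) * powR (h o / u o) (q - 1).
Proof.
move=> wg vp fW NW UW Uo q1 s0 u0 Hu h0 hU Hh.
set s := (fset_set W : {fset V}).
have ins : forall z, U z -> z \in s by move=> z /UW Wz; rewrite in_fset_set // mem_set.
have q0 : 0 < q by apply: lt_trans q1.
have p0 : 0 < q - 1 by rewrite subr_gt0.
have mu_ge0 : forall x y, 0 <= mu x y by case: wg.
set t := fun x => h x / u x.
set G := fun x => h x * powR (t x) (q - 1).
have G0 : forall x, 0 <= G x by move=> x; rewrite mulr_ge0 ?powR_ge0.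
have GU : forall x, ~ U x -> G x = 0 by move=> x nx; rewrite /G hU // mul0r.
have stepA : forall x, U x ->
  vmu mu x * G x - \sum_(z <- s) mu x z * G z <=
  q * powR (t x) (q - 1) * (if o == x then 1 else 0) -
     (q - 1) * (vmu mu x * sigma x * powR (h x) q).
  move=> x Ux.
  have t0 : 0 <= t x by rewrite divr_ge0 // ltW.
  apply: (@stepA_real R q (vmu mu x) (h x) (u x) (powR (t x) (q - 1)) (powR (t x) q) _ _
     (\sum_(z <- s) mu x z * h z) (\sum_(z <- s) mu x z * u z) (lap mu u x)) => //.
  - exact: powR_ge0.
  - rewrite -(mulr_powRB1 t0 q0) /t; field; by rewrite gt_eqF.
  - rewrite !mulr_sumr -sumrB; apply: ler_sum => z _.
    have H := conv_pt q1 (u0 x) (u0 z) (h0 x) (h0 z).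
    have H2 := ler_wpM2l (mu_ge0 x z) H.
    apply: le_trans H2; rewrite le_eqVlt; apply/orP; left; apply/eqP; rewrite /G /t; ring.
  - have := Hh x Ux; rewrite eq_sym; lra.
  - exact: sum_mu_u wg vp fW (NW x Ux).
  - have : powR (t x) q * (sigma x * powR (u x) q) <= powR (t x) q * - lap mu u x.
      by apply: ler_wpM2l; [exact: powR_ge0 | exact: Hu].
    rewrite mulrN mulrCA -powRM ?(ltW (u0 x)) // /t divfK ?gt_eqF //.
    lra.
have stepB : 0 <= \sum_(x <- s | x \in U) (vmu mu x * G x - \sum_(z <- s) mu x z * G z).
  rewrite sumrB subr_ge0 exchange_big /=.
  rewrite [leRHS]big_mkcond /=; apply: ler_sum => z _.
  rewrite -mulr_suml.
  case: ifPn => [/set_mem Uz | nz].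
    apply: ler_wpM2r => //.
    rewrite (vmu_s wg fW (NW z Uz)) [leRHS](bigID (fun x => x \in U)) /=.
    under eq_bigr => i _ do rewrite (proj1 wg).
    rewrite lerDl; apply: sumr_ge0 => x _; exact: mu_ge0.
  rewrite GU ?mulr0 //; by move=> /mem_set; rewrite (negbTE nz).
have stepC := @ler_sum _ _ s (fun x => x \in U) _ _ (fun x Ux => stepA x (set_mem Ux)).
rewrite sumrB in stepC.
have E1 : \sum_(x <- s | x \in U) q * powR (t x) (q - 1) * (if o == x then 1 else 0) =
   q * powR (t o) (q - 1).
  rewrite big_mkcond /=.
  rewrite -[RHS](sum_delta _ _ s o (fun _ => q * powR (t o) (q - 1))) ?ins //.
  apply: eq_bigr => x _.
  have [<-|nox] := eqVneq o x; first by rewrite (mem_set Uo) mulr1 mul1r.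
  by case: ifP => _; rewrite ?mulr0 mul0r.
have E2 : \sum_(x <- s) vmu mu x * sigma x * powR (h x) q =
    \sum_(x <- s | x \in U) vmu mu x * sigma x * powR (h x) q.
  rewrite [RHS]big_mkcond /=; apply: eq_bigr => x _.
  case: ifPn => // nx; rewrite hU ?powR0 ?mulr0 // ?gt_eqF //.
  by move=> /mem_set; rewrite (negbTE nx).
rewrite [X in _ <= X]sumrB -mulr_sumr E1 in stepC.
rewrite E2.
rewrite sumrB in stepB.
have := le_trans stepB stepC.
rewrite subr_ge0 => H.
rewrite mulrAC ler_pdivlMr //; rewrite /t in H; lra.
Qed.
Lemma vmu_ge_term {R : realType} {V : choiceType} {mu : V -> V -> R} x z :
  weighted_graph mu -> locally_finite mu -> adj mu x z -> mu x z <= vmu mu x.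
Proof.
move=> wg lf axz; rewrite /vmu (fsbigD1 z) //=.
by rewrite lerDl; apply: fsumr_ge0 => y _; case: wg.
Qed.

Lemma vpos {R : realType} {V : choiceType} {mu : V -> V -> R} :
  weighted_graph mu -> locally_finite mu -> connected_graph mu ->
  infinite_set [set: V] -> forall x, 0 < vmu mu x.
Proof.
move=> wg lf cg inf x.
have v0 : 0 <= vmu mu x by apply: fsumr_ge0 => y _; case: wg.
rewrite lt_neqAle v0 andbT; apply/negP => /eqP v0'.
have nadj : forall z, ~ adj mu x z.
  move=> z axz; have := vmu_ge_term x z wg lf axz; rewrite -v0' => H.
  by move: axz; rewrite /adj => H2; have := lt_le_trans H2 H; rewrite ltxx.
have gb : forall n, gball mu x n `<=` [set x].
  elim=> [|n IH] //= y [/IH //|[w /IH -> axy]].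
  by case: (nadj y).
apply: inf; apply: (@sub_finite_set _ _ [set x]); last exact: finite_set1.
move=> y _; have [n Hn] := cg x y; exact: gb Hn.
Qed.

Lemma upos {R : realType} {V : choiceType} {mu : V -> V -> R} (q : R) (sigma u : V -> R) o :
  weighted_graph mu -> locally_finite mu -> connected_graph mu -> (forall x, 0 < vmu mu x) ->
  1 < q -> (forall x, 0 <= sigma x) -> (forall x, 0 <= u x) ->
  (forall x, - lap mu u x >= sigma x * powR (u x) q) -> 0 < u o -> forall x, 0 < u x.
Proof.
move=> wg lf cg vp q1 s0 u0 Hu uo x.
rewrite lt_neqAle u0 andbT; apply/negP => /eqP ux.
have prop : forall y, 0 = u y -> forall z, adj mu y z -> 0 = u z.
  move=> y uy z ayz.
  have H := Hu y; rewrite -uy powR0 ?mulr0 ?gt_eqF ?(lt_trans _ q1) // in H.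
  have Hs : \sum_(w \in nbrs mu y) mu y w * (u w - u y) = 0.
    apply: le_anti; apply/andP; split.
      move: H; rewrite /lap oppr_ge0 pmulr_rle0 // invr_gt0 //.
    by apply: fsumr_ge0 => w _; rewrite -uy subr0 mulr_ge0 //; case: wg.
  have Hz : mu y z * (u z - u y) = 0.
    apply: (pfsumr_eq0 (lf y) _ Hs ayz) => w _.
    by rewrite -uy subr0 mulr_ge0 //; case: wg.
  move: Hz; rewrite -uy subr0 => /eqP; rewrite mulf_eq0 => /orP[/eqP m0|/eqP ->] //.
  by move: ayz; rewrite /adj m0 ltxx.
have gb : forall n w, gball mu x n w -> 0 = u w.
  elim=> [|n IH] w /=; first by move=> ->.
  move=> [/IH //|[v /IH Hv avw]]; exact: prop Hv _ avw.
have [n Hn] := cg x o.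
by have := gb n o Hn; move=> H; move: uo; rewrite -H ltxx.
Qed.
Lemma powR_seq_cvg {R : realType} (q a : R) (x : nat -> R) : 0 < a ->
  x n @[n --> \oo] --> a -> powR (x n) q @[n --> \oo] --> powR a q.
Proof.
move=> a0 xa.
have -> : powR a q = expR (q * ln a) by rewrite /powR gt_eqF //; rewrite mulrC.
apply: (@cvg_trans _ ((fun n => expR (q * ln (x n))) @ \oo)).
  apply: near_eq_cvg; near=> n; rewrite /powR gt_eqF; first by rewrite mulrC.
  near: n; exact: (@cvgr_gt _ _ _ _ _ _ xa _ a0).
apply: (cvg_comp (fun n => q * ln (x n))); last exact: continuous_expR.
apply: cvgMl_tmp; apply: (cvg_comp x _ xa); exact: continuous_ln.
Unshelve. all: end_near. Qed.

Theorem lemma4p2 (R : realType) (V : choiceType) (mu : V -> V -> R)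
  (q : R) (sigma u : V -> R) (o : V) (Rad : nat) :
  weighted_graph mu -> locally_finite mu -> connected_graph mu ->
  infinite_set [set: V] ->
  1 < q -> (forall x, 0 <= sigma x) ->
  (forall x, 0 <= u x) ->
  (forall x, - lap mu u x >= sigma x * powR (u x) q) ->
  (1 <= Rad)%N ->
  powR (u o) q * sigma o * vmu mu o <=
    powR (q / (q - 1)) (q / (q - 1)) *
    powR (\sum_(y \in [set: V])
            powR (green mu (gball mu o Rad) o y) q * sigma y * vmu mu y)
         (- (q - 1)^-1).
Proof.
move=> wg lf cg inf q1 s0 u0 Hu Rad1.
have vp := vpos wg lf cg inf.
have q0 : 0 < q by apply: lt_trans q1.
have p0 : 0 < q - 1 by rewrite subr_gt0.
set Sum := \sum_(y \in _) _.
have [uo0|uon] := eqVneq (u o) 0.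
  by rewrite uo0 powR0 ?gt_eqF // !mul0r mulr_ge0 ?powR_ge0.
have [so0|son] := eqVneq (sigma o) 0.
  by rewrite so0 mulr0 mul0r mulr_ge0 ?powR_ge0.
have uo : 0 < u o by rewrite lt_neqAle eq_sym uon u0.
have so : 0 < sigma o by rewrite lt_neqAle eq_sym son s0.
have up := upos q sigma u o wg lf cg vp q1 s0 u0 Hu uo.
set U := gball mu o Rad.
set W := gball mu o Rad.+1.
have fW : finite_set W := gball_finite _ _ mu o Rad.+1 lf.
have NW : forall x, U x -> nbrs mu x `<=` W := fun x hx => gball_nbrs _ _ mu o Rad x hx.
have UW : U `<=` W by move=> x hx; left.
have Uo : U o := gball_center _ _ mu o Rad.
set s := (fset_set W : {fset V}).
have ins : forall z, U z -> z \in s by move=> z /UW Wz; rewrite in_fset_set // mem_set.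
have single : forall N y, U y -> HH mu U o N y * - lap mu u y <= u o.
  move=> N y Uy; apply: le_trans (repr u wg vp fW NW UW u0 Uo (N:=N)).
  rewrite /HH mulr_suml; apply: ler_sum => n _.
  rewrite (bigD1_seq y) ?ins //= lerDl; apply: sumr_ge0 => z _.
  rewrite mulr_ge0 ?K_ge0 //; apply: le_trans (Hu z); by rewrite mulr_ge0 ?powR_ge0.
pose hN := fun N y => HH mu U o N y / vmu mu y.
have mainN : forall N, \sum_(x <- s) vmu mu x * sigma x * powR (hN N x) q <=
    q / (q - 1) * powR (hN N o / u o) (q - 1).
  move=> N; apply: (main_ineq o q sigma u (hN N) wg vp fW NW UW Uo q1 s0 up Hu).
  - by move=> x; rewrite divr_ge0 ?HH_ge0 // ltW.
  - by move=> x nx; rewrite /hN /HH big1 ?mul0r // => n _; exact: K_out_y.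
  - by move=> y Uy; rewrite /hN mulrC divfK ?gt_eqF //; exact: HH_harm wg vp fW NW UW Uo Uy.
set a := powR (u o) q * sigma o * vmu mu o.
have a0 : 0 < a by rewrite !mulr_gt0 ?powR_gt0.
have tb : forall N, hN N o / u o <= a^-1.
  move=> N; rewrite -(ler_pM2l a0) mulfV ?gt_eqF // mulrA ler_pdivrMr // mul1r.
  have E : a * hN N o = sigma o * powR (u o) q * HH mu U o N o.
    by rewrite /a /hN; field; rewrite gt_eqF.
  rewrite E; apply: le_trans (single N o Uo); rewrite [leRHS]mulrC.
  apply: ler_wpM2r; [exact: HH_ge0 | exact: Hu].
set B := q / (q - 1) * powR (a^-1) (q - 1).
have SN : forall N, \sum_(x <- s) vmu mu x * sigma x * powR (hN N x) q <= B.
  move=> N; apply: le_trans (mainN N) _; rewrite ler_wpM2l ?divr_ge0 ?(ltW q0) ?(ltW p0) //.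
  apply: ge0_ler_powR; first exact: ltW.
  - by rewrite nnegrE divr_ge0 ?(ltW uo) // divr_ge0 ?HH_ge0 // ltW.
  - by rewrite nnegrE invr_ge0 ltW.
  - exact: tb.
have HHmono : forall y, {homo (fun N => HH mu U o N y) : n m / (n <= m)%N >-> n <= m}.
  by move=> y n m nm; exact: HH_mono.
have cvgH : forall y, U y -> 0 < sigma y -> cvgn (fun N => HH mu U o N y).
  move=> y Uy sy; apply: nondecreasing_is_cvgn; first exact: HHmono.
  have fy : 0 < - lap mu u y.
    by apply: lt_le_trans (Hu y); rewrite mulr_gt0 ?powR_gt0.
  exists (u o / (- lap mu u y)) => _ [N _ <-].
  by rewrite ler_pdivlMr //; exact: single N y Uy.
pose T := fun N y => vmu mu y * sigma y * powR (hN N y) q.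
pose Tl := fun y => powR (green mu U o y) q * sigma y * vmu mu y.
have Tcvg : forall y, T N y @[N --> \oo] --> Tl y.
  move=> y.
  have [Uy|nUy] := pselect (U y); last first.
    have -> : Tl y = 0.
      rewrite /Tl /green.
      have -> : (y \in U) = false by apply/negP => /set_mem.
      by rewrite andbF powR0 ?gt_eqF // !mul0r.
    have -> : (fun N => T N y) = (fun _ => 0).
      apply: funext => N; rewrite /T /hN /HH big1 ?mul0r ?powR0 ?gt_eqF ?mulr0 //.
      by move=> n _; exact: K_out_y.
    exact: cvg_cst.
  have [sy0|syn] := eqVneq (sigma y) 0.
    have -> : Tl y = 0 by rewrite /Tl sy0 mulr0 mul0r.
    have -> : (fun N => T N y) = (fun _ => 0).
      by apply: funext => N; rewrite /T sy0 mulr0 mul0r.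
    exact: cvg_cst.
  have sy : 0 < sigma y by rewrite lt_neqAle eq_sym syn s0.
  have cH := cvgH y Uy sy.
  have HL := nondecreasing_cvgn_le (HHmono y) cH.
  have L0 : 0 <= limn (fun N => HH mu U o N y) by apply: le_trans (HL 0%N); exact: HH_ge0.
  have Gy : green mu U o y = limn (fun N => HH mu U o N y) / vmu mu y.
    by rewrite /green (mem_set Uo) (mem_set Uy).
  move: L0; rewrite le_eqVlt => /orP[/eqP L0|Lpos].
    have -> : Tl y = 0 by rewrite /Tl Gy -L0 mul0r powR0 ?gt_eqF // !mul0r.
    have -> : (fun N => T N y) = (fun _ => 0).
      apply: funext => N; rewrite /T /hN.
      have -> : HH mu U o N y = 0.
        by apply: le_anti; rewrite HH_ge0 // andbT L0 HL.
      by rewrite mul0r powR0 ?gt_eqF // mulr0.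
    exact: cvg_cst.
  have -> : Tl y = vmu mu y * sigma y * powR (limn (fun N => HH mu U o N y) / vmu mu y) q.
    by rewrite /Tl Gy [RHS]mulrC (mulrC (vmu mu y)) mulrA.
  apply: cvgMl_tmp; apply: powR_seq_cvg; first by rewrite divr_gt0.
  by apply: cvgMr_tmp; exact: cH.
have SumE : Sum = \sum_(y <- s) Tl y.
  rewrite /Sum (fsbigTE s) // => i nis.
  have nUi : ~ U i by move=> /ins; rewrite (negbTE nis).
  rewrite /green.
  have -> : (i \in U) = false by apply/negP => /set_mem.
  by rewrite andbF powR0 ?gt_eqF // !mul0r.
have Sum_le : Sum <= B.
  rewrite SumE.
  have cv : \sum_(y <- s) T N y @[N --> \oo] --> \sum_(y <- s) Tl y.
    apply: (@cvg_big _ _ +%R 0 xpredT add_continuous) => // y _; exact: Tcvg.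
  apply: (cvgr_to_le cv); apply: filterE => N; exact: SN N.
have Tl0 : forall y, 0 <= Tl y by move=> y; rewrite /Tl mulr_ge0 ?mulr_ge0 ?powR_ge0 // ltW.
have Sum_pos : 0 < Sum.
  rewrite SumE (bigD1_seq o) ?ins //=.
  apply: (@lt_le_trans _ _ (Tl o)); last by rewrite lerDl; apply: sumr_ge0 => y _.
  have cH := cvgH o Uo so.
  have HL := nondecreasing_cvgn_le (HHmono o) cH 1%N.
  have H1 : HH mu U o 1 o = 1 by rewrite /HH big_ord1 K0_eq // eqxx.
  rewrite /Tl /green (mem_set Uo) /= !mulr_gt0 ?powR_gt0 ?divr_gt0 //.
  by apply: lt_le_trans HL; rewrite H1.
set c := q / (q - 1).
have c1 : 1 <= c by rewrite /c ler_pdivlMr // mul1r lerBlDr lerDl.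
set Y := powR Sum ((q - 1)^-1).
have Y0 : 0 < Y by rewrite powR_gt0.
have YB : Y <= powR c ((q - 1)^-1) * a^-1.
  apply: (@le_trans _ _ (powR B ((q - 1)^-1))).
    apply: ge0_ler_powR => //; [by rewrite invr_ge0 ltW | by rewrite nnegrE ltW |].
    by rewrite nnegrE mulr_ge0 ?powR_ge0 // ltW // (le_lt_trans _ (lt_le_trans ltr01 c1)).
  rewrite /B powRM ?powR_ge0 ?(le_trans ler01 c1) // -powRrM mulfV ?gt_eqF //.
  by rewrite powRr1 // invr_ge0 ltW.
rewrite powRN -/Y.
rewrite -(ler_pM2r Y0) divfK ?gt_eqF //.
apply: (@le_trans _ _ (a * (powR c ((q - 1)^-1) * a^-1))).
  by apply: ler_wpM2l => //; exact: ltW.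
rewrite mulrCA mulfV ?gt_eqF // mulr1.
apply: ler_powR => //.
by rewrite /c -{1}(mul1r ((q - 1)^-1)) ler_pM2r ?invr_gt0 // ltW.
Qed.
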